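(* Let $c\in[\frac12,1)$ and let $d,\delta$ be positive integers with $d\ge\delta$. Let $G$ be a graph with maximum degree $\delta$ and $w:V(G)\to[0,1]$ a weight function with $w(V(G))=1$, and assume $G$ has no $d$-bounded $(w,c)$-balanced separator. Fix a bijection $\mathcal{O}:V(G)\to\{1,\dots,|V(G)|\}$. Then the relation $\le_A$ is a partial order on $V(G)$.
   Context: For $X\subseteq V(G)$, $w(X)=\sum_{x\in X}w(x)$; $N[v]=N(v)\cup\{v\}$; $N^d[v]$ is the set of vertices at distance at most $d$ from $v$. A set $X$ is $d$-bounded if $X\subseteq N^d[v]$ for some $v$. $X$ is a $(w,c)$-balanced separator if every connected component $D$ of $G\setminus X$ has $w(D)\le c$. For $v\in V(G)$, the canonical star separation $S_v=(A_v,C_v,B_v)$ is: $B_v$ the (under these assumptions unique) largest-weight connected component of $G\setminus N[v]$, $C_v$ the set consisting of $v$ and every vertex of $N(v)$ with a neighbor in $B_v$, and $A_v=V(G)\setminus(B_v\cup C_v)$. Two vertices $u,v$ are star twins if $B_u=B_v$, $C_u\setminus\{u\}=C_v\setminus\{v\}$ and $A_u\setminus\{v\}=A_v\setminus\{u\}$. The relation $\le_A$ is defined by: $x\le_A y$ if $x=y$, or $x,y$ are star twins and $\mathcal{O}(x)<\mathcal{O}(y)$, or $x,y$ are not star twins and $y\in A_x$. *)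

(* Defs.v *)
From HB Require Import structures.
From mathcomp Require Import all_boot all_order all_algebra.
Set Implicit Arguments. Unset Strict Implicit. Unset Printing Implicit Defensive.
Import Order.TTheory GRing.Theory Num.Theory.
Local Open Scope ring_scope.

Section Graph.
Variables (T : finType) (e : rel T).

Definition simple_graph := symmetric e /\ irreflexive e.

Definition nbhd (v : T) : {set T} := [set u | e v u].
Definition cnbhd (v : T) : {set T} := v |: nbhd v.

Definition max_degree (k : nat) :=
  (forall v, #|nbhd v| <= k)%N /\ exists v, #|nbhd v| = k.

Fixpoint ball (k : nat) (v : T) : {set T} :=
  match k with
  | 0 => [set v]
  | k'.+1 => ball k' v :|: [set u | [exists x in ball k' v, e x u]]
  end.

Definition bounded (k : nat) (X : {set T}) := exists v, X \subset ball k v.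

Definition del_rel (X : {set T}) : rel T :=
  fun x y => [&& e x y, x \notin X & y \notin X].

Definition components (X : {set T}) : {set {set T}} :=
  [set [set y | connect (del_rel X) x y] | x in ~: X].

Variable R : realFieldType.
Variable w : T -> R.

Definition wt (X : {set T}) : R := \sum_(x in X) w x.

Definition balanced_sep (c : R) (X : {set T}) :=
  forall D, D \in components X -> wt D <= c.

(* B_v : a largest-weight component of G \ N[v] (set0 if there is none);
   under the standing assumptions it is unique *)
Definition Bv (v : T) : {set T} :=
  let CC := components (cnbhd v) in
  match [pick C in CC | [forall C' in CC, wt C' <= wt C]] with
  | Some C => C
  | None => set0
  end.

Definition Cv (v : T) : {set T} :=
  v |: [set u in nbhd v | [exists b in Bv v, e u b]].

Definition Av (v : T) : {set T} := ~: (Bv v :|: Cv v).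

Definition star_twins (u v : T) : bool :=
  [&& Bv u == Bv v, Cv u :\ u == Cv v :\ v & Av u :\ v == Av v :\ u].

Variable O : T -> nat.

Definition leA (x y : T) : bool :=
  [|| x == y, star_twins x y && (O x < O y)%N
    | ~~ star_twins x y && (y \in Av x)].

End Graph.

(* Main.v *)
Require Import Defs.
From HB Require Import structures.
From mathcomp Require Import all_boot all_order all_algebra.
From mathcomp Require Import lra.
Import Order.TTheory GRing.Theory Num.Theory.
Local Open Scope ring_scope.

Section Aux.
Set Implicit Arguments. Unset Strict Implicit.
Variables (R : realFieldType) (T : finType) (e : rel T) (w : T -> R).
Hypothesis esym : symmetric e.
Hypothesis eirr : irreflexive e.
Hypothesis w0 : forall x, 0 <= w x.
Hypothesis wT : wt w [set: T] = 1.

Lemma wt_sub (A B : {set T}) : A \subset B -> wt w A <= wt w B.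
Proof.
move=> sAB; rewrite /wt [X in X <= _]big_mkcond [X in _ <= X]big_mkcond /=.
apply: ler_sum => x _; case: ifP => xA; first by rewrite (subsetP sAB x xA).
by case: ifP.
Qed.

Lemma wt_disj (A B : {set T}) : (forall x, x \in A -> x \in B -> False) ->
  wt w A + wt w B <= 1.
Proof.
move=> dAB; rewrite -wT /wt [X in X + _]big_mkcond [X in _ + X]big_mkcond.
rewrite [X in _ <= X]big_mkcond -big_split /=.
apply: ler_sum => x _; rewrite in_setT.
case xA: (x \in A); case xB: (x \in B); rewrite ?addr0 ?add0r //.
by case: (dAB x xA xB).
Qed.

Definition K (X : {set T}) a := [set y | connect (del_rel e X) a y].

Lemma del_sym (X : {set T}) : symmetric (del_rel e X).
Proof.
move=> x y; rewrite /del_rel esym.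
by case: (x \in X); case: (y \in X); rewrite ?andbF ?andbT.
Qed.

Lemma connS (X : {set T}) : connect_sym (del_rel e X).
Proof. exact: sym_connect_sym (del_sym X). Qed.

Lemma conn_notin (X : {set T}) a y : a \notin X -> connect (del_rel e X) a y -> y \notin X.
Proof.
move=> aX /connectP [p pth ->].
elim: p a aX pth => //= b p IH a aX /andP[/and3P[_ _ bX] pth]; exact: IH.
Qed.

Lemma comp_sub (X C : {set T}) : C \in components e X -> forall u, u \in C -> u \notin X.
Proof.
case/imsetP => a; rewrite inE => aX -> u; rewrite inE; exact: conn_notin.
Qed.

Lemma comp_eq (X C1 C2 : {set T}) u : C1 \in components e X -> C2 \in components e X ->
  u \in C1 -> u \in C2 -> C1 = C2.
Proof.
case/imsetP => a _ ->; case/imsetP => b _ ->; rewrite !inE => au bu.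
have ab: connect (del_rel e X) a b by rewrite (connect_trans au) // connS.
apply/setP=> y; rewrite !inE; apply/idP/idP => h.
  by rewrite (connect_trans _ h) // connS.
by rewrite (connect_trans ab h).
Qed.

Lemma comp_closed (X C : {set T}) b u : C \in components e X -> b \in C -> u \notin X ->
  e b u -> u \in C.
Proof.
move=> Cc bC uX ebu; have bX := comp_sub Cc bC.
move: Cc bC; case/imsetP => a _ ->; rewrite !inE => ab.
apply: (connect_trans ab); apply: connect1; by rewrite /del_rel ebu bX uX.
Qed.

Lemma comp_move (X Y C : {set T}) : C \in components e X ->
  (forall v, v \in C -> v \notin Y) ->
  exists2 D, D \in components e Y & C \subset D.
Proof.
case/imsetP => a; rewrite inE => aX -> H.
have aC : a \in K X a by rewrite inE connect0.
exists (K Y a); first by apply/imsetP; exists a; rewrite ?inE ?H.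
apply/subsetP => y; rewrite inE => /connectP [p pth ->]; rewrite inE.
apply/connectP; exists p => //.
have allC := path_connect pth.
have: forall v, v \in a :: p -> v \notin Y.
  by move=> v vp; apply: H; rewrite inE; apply: allC.
move=> Hv; clear allC H aC aX; move: Hv.
elim: p a pth => //= c q IH b /andP[/and3P[ebc _ _] pq] Hv /=.
rewrite /del_rel ebc (Hv b (mem_head _ _)) (Hv c); last by rewrite !inE eqxx orbT.
rewrite /=; apply: IH => // v vq; apply: Hv; by rewrite inE vq orbT.
Qed.

Lemma cnbE v u : (u \in cnbhd e v) = (u == v) || e v u.
Proof. by rewrite /cnbhd /nbhd !inE. Qed.

Hypothesis hub : forall v, exists2 D, D \in components e (cnbhd e v) & 2^-1 < wt w D.

Lemma Bv_spec v : Bv e w v \in components e (cnbhd e v) /\ 2^-1 < wt w (Bv e w v).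
Proof.
have [D Dc Dw] := hub v; rewrite /Bv.
case: pickP => [C /andP[Cc /forall_inP HC] | H].
  by split => //; exact: lt_le_trans Dw (HC D Dc).
exfalso; have := H D; rewrite Dc /= => /negbT/negP; apply.
apply/forall_inP => C' C'c; case: (C' =P D) => [-> //| neq].
have := wt_disj (fun u uC uD => neq (comp_eq C'c Dc uC uD)).
move=> h; lra.
Qed.

Lemma Bv_uniq v D : D \in components e (cnbhd e v) -> 2^-1 < wt w D -> D = Bv e w v.
Proof.
move=> Dc Dw; have [Bc Bw] := Bv_spec v.
case: (D =P Bv e w v) => // neq.
have := wt_disj (fun u uC uD => neq (comp_eq Dc Bc uC uD)).
move=> h; exfalso; lra.
Qed.

Lemma Bv_out v u : u \in Bv e w v -> u \notin cnbhd e v.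
Proof. exact: comp_sub (Bv_spec v).1 u. Qed.

Lemma Bsub x z : z \in Av e w x -> Bv e w x \subset Bv e w z.
Proof.
rewrite /Av in_setC in_setU negb_or => /andP[zB zC].
have [Bc _] := Bv_spec x.
have H : forall v, v \in Bv e w x -> v \notin cnbhd e z.
  move=> v vB; rewrite cnbE negb_or; apply/andP; split.
    by apply/eqP => vz; rewrite -vz vB in zB.
  apply/negP => ezv.
  have vout := Bv_out vB; rewrite cnbE negb_or in vout.
  case/andP: vout => vx nexv.
  case: (boolP (z \in cnbhd e x)) => zN.
    rewrite cnbE in zN; case/orP: zN => [/eqP zx | exz].
      by subst z; rewrite ezv in nexv.
    apply: (negP zC); rewrite /Cv /nbhd !inE exz /=; apply/orP; right.
    by apply/existsP; exists v; rewrite vB ezv.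
  apply: (negP zB); apply: (comp_closed Bc vB zN); by rewrite esym.
have [D Dc sub] := comp_move Bc H.
have : 2^-1 < wt w D := lt_le_trans (Bv_spec x).2 (wt_sub sub).
by move/(Bv_uniq Dc) => <-.
Qed.

Lemma Asub x z : z != x -> Bv e w x \subset Bv e w z -> z \in Av e w x.
Proof.
move=> zx sub; rewrite /Av in_setC in_setU negb_or; apply/andP; split.
  by apply/negP => zB; have := Bv_out (subsetP sub _ zB); rewrite cnbE eqxx.
rewrite /Cv /nbhd !inE (negbTE zx) /=.
apply/negP => /andP[_ /existsP[b /andP[bB ezb]]].
by have := Bv_out (subsetP sub _ bB); rewrite cnbE ezb orbT.
Qed.

Lemma memA x u : (u \in Av e w x) = (u != x) && (Bv e w x \subset Bv e w u).
Proof.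
apply/idP/andP => [uA | [ux sub]]; last exact: Asub.
split; last exact: Bsub.
apply/eqP => ux; subst u; move: uA.
by rewrite /Av /Cv !inE eqxx /= orbT.
Qed.

Lemma BC x u : u \in Bv e w x -> u \notin Cv e w x.
Proof.
move=> uB; apply/negP => uC; have := Bv_out uB; rewrite cnbE.
move: uC; rewrite /Cv /nbhd !inE => /orP[-> //| /andP[-> _]]; by rewrite orbT.
Qed.

Lemma CE x u : (u \in Cv e w x) = (u \notin Bv e w x) && (u \notin Av e w x).
Proof.
rewrite /Av in_setC in_setU negbK; case uB: (u \in Bv e w x) => /=; last by [].
by rewrite (negbTE (BC uB)).
Qed.

Lemma memC x u : (u \in Cv e w x :\ x) =
  [&& u != x, u \notin Bv e w x & ~~ (Bv e w x \subset Bv e w u)].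
Proof. by rewrite in_setD1 CE memA; case: (u == x). Qed.

Lemma memAD1 x y u : (u \in Av e w x :\ y) =
  [&& u != y, u != x & Bv e w x \subset Bv e w u].
Proof. by rewrite in_setD1 memA. Qed.

Lemma twinsE x y : star_twins e w x y = (Bv e w x == Bv e w y).
Proof.
apply/idP/idP => [/and3P[/eqP-> _ _] | /eqP eB]; first exact: eqxx.
apply/and3P; split; first exact/eqP.
  apply/eqP/setP => u; rewrite !memC eB; have [->|ux] := eqVneq u x.
    rewrite eB (subxx (Bv e w y)) !andbF; reflexivity.
  have [->|uy] := eqVneq u y.
    rewrite (subxx (Bv e w y)) !andbF; reflexivity.
  reflexivity.
apply/eqP/setP => u.
have h : [&& u != y, u != x & Bv e w x \subset Bv e w u] =
  [&& u != x, u != y & Bv e w y \subset Bv e w u] by rewrite eB andbCA.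
refine (etrans (memAD1 x y u) _). refine (etrans h _). exact (Logic.eq_sym (memAD1 y x u)).
Qed.

Variable O : T -> nat.

Lemma leAE x y : leA e w O x y = [|| x == y,
   (Bv e w x == Bv e w y) && (O x < O y)%N |
   (Bv e w x != Bv e w y) && (Bv e w x \subset Bv e w y)].
Proof.
rewrite /leA twinsE memA; case: (x =P y) => [->|xy] //=.
by case: (y =P x) => [yx|]; [by case: xy|].
Qed.

End Aux.
Unset Implicit Arguments.

Theorem lemma4p3 (R : realFieldType) (c : R) (d delta : nat)
  (T : finType) (e : rel T) (w : T -> R) (O : T -> nat) :
  2^-1 <= c -> c < 1 ->
  (0 < delta)%N -> (0 < d)%N -> (delta <= d)%N ->
  simple_graph e ->
  max_degree e delta ->
  (forall x, 0 <= w x <= 1) ->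
  wt w [set: T] = 1 ->
  ~ (exists X : {set T}, bounded e d X /\ balanced_sep e w c X) ->
  injective O ->
  (forall x, (1 <= O x <= #|T|)%N) ->
  (forall k, (1 <= k <= #|T|)%N -> exists x, O x = k) ->
  [/\ reflexive (leA e w O), antisymmetric (leA e w O)
    & transitive (leA e w O)].
Proof.
move=> hc _ _ d0 _ [esym eirr] _ w01 wT nosep _ _ _.
have w0 : forall x, 0 <= w x by move=> x; case/andP: (w01 x).
have hub : forall v, exists2 D, D \in components e (cnbhd e v) & 2^-1 < wt w D.
  move=> v; case: (boolP [exists D in components e (cnbhd e v), c < wt w D]).
    case/existsP => D /andP[Dc Dw]; exists D => //; exact: le_lt_trans hc Dw.
  move=> H; exfalso; apply: nosep; exists (cnbhd e v); split.
    exists v; elim: d d0 => // [[|k] IH _].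
      apply/subsetP => u; rewrite cnbE /= !inE => /orP[-> //|evu].
      by apply/orP; right; apply/existsP; exists v; rewrite inE eqxx evu.
    apply: subset_trans (IH isT) _; exact: subsetUl.
  move=> D Dc; move/existsPn/(_ D): H; by rewrite Dc /= -leNgt.
have LE := leAE esym w0 wT hub O.
split.
- by move=> x; rewrite LE eqxx.
- move=> x y; rewrite !LE; case: (x =P y) => // xy.
  case: (y =P x) => [yx|yx]; first by case: xy.
  rewrite [Bv e w y == _]eq_sym /=.
  case: (Bv e w x =P Bv e w y) => [eB|nB] /=; rewrite ?orbF.
    by case/andP => h1 h2; have := ltn_trans h1 h2; rewrite ltnn.
  case/andP => s1 s2; by case: nB; apply/eqP; rewrite eqEsubset s1 s2.
- move=> y x z; rewrite !LE.
  have [->|nxy] := eqVneq x y; first by move=> _ h; exact: h.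
  have [<-|nyz] := eqVneq y z; first by move=> h _; rewrite (negbTE nxy); exact: h.
  rewrite /=.
  have [exy|nexy] := eqVneq (Bv e w x) (Bv e w y) => /=; rewrite ?orbF.
    have [eyz|neyz] := eqVneq (Bv e w y) (Bv e w z) => /=; rewrite ?orbF.
      move=> h1 h2; apply/orP; right; apply/orP; left.
      rewrite (ltn_trans h1 h2) andbT exy eyz; apply/eqP; reflexivity.
    move=> _ s; apply/orP; right; apply/orP; right.
    by rewrite exy s andbT.
  have [eyz|neyz] := eqVneq (Bv e w y) (Bv e w z) => /=; rewrite ?orbF.
    move=> s _; apply/orP; right; apply/orP; right.
    by rewrite -eyz s andbT.
  move=> s1 s2; apply/orP; right; apply/orP; right.
  rewrite (subset_trans s1 s2) andbT; apply/negP => /eqP exz.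
  apply: (negP nexy); rewrite eqEsubset s1 /= exz; exact: s2.
Qed.
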